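(* In the setting below, consider a purely asymmetric configuration with $\lambda_{DA}$ the lexicographically strictly largest word. After one move by a robot according to Algorithm 2, $\lambda_{DA}$ remains strictly larger than each of $\lambda_{CD},\lambda_{AD},\lambda_{CB},\lambda_{AB},\lambda_{BA},\lambda_{BC}$.
   Context: Setting: $G$ is the $n\times n$ grid, $n$ even, configuration $f:V(G)\to\{0,1,2\}$ ($0$ empty, $1$ singleton, $2$ multiplicity = at least two robots; robots have only weak multiplicity detection), no corner occupied, at least one robot on the boundary. Corners $A,B,C,D$ with sides $DA,AB,BC,CD$. For adjacent corners $(X,Y)$, $\lambda_{XY}\in\{0,1,2\}^{n^2}$ reads $f$ along side $XY$ from $X$ to $Y$, then along successive parallel grid lines in order of increasing distance from $XY$, each in the same direction. Words compared lexicographically. Coordinates: when $\lambda_{DA}$ is strictly largest, node $(i,j)$ ($1\le i,j\le n$) is at distance $i-1$ from side $DC$ and $j-1$ from side $DA$; thus $D=(1,1)$, $A=(n,1)$, $C=(1,n)$, $B=(n,n)$, and $(i,j)$ is entry $n(j-1)+i$ of $\lambda_{DA}$. Asymmetric: $\lambda_{DA}$ strictly exceeds the other seven words. Second largest corner: whichever of $A,C$ starts the largest of $\lambda_{AB},\lambda_{AD},\lambda_{CB},\lambda_{CD}$. Almost symmetric of the first type: asymmetric, no multiplicities, a robot on $DC$, and $\lambda_{DA},\lambda_{DC}$ coincide after replacing each one's first nonzero entry by $0$. Almost symmetric of the second type: asymmetric, no multiplicities, and for the second largest corner $X$ with adjacent corners $Y,Z$, $\lambda_{XY},\lambda_{XZ}$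 coincide after replacing each one's first nonzero entry by $0$. Purely asymmetric: asymmetric and neither almost symmetric type. Leading duo of a purely asymmetric configuration: if the first nonzero entry of $\lambda_{DA}$ is $1$, the robots at the first two nonzero entries of $\lambda_{DA}$ (the first robot and the second robot); if it is $2$, the robots of that multiplicity. Algorithm 2: in a purely asymmetric configuration, each robot of the leading duo, located at $(i,j)$, moves to $(i-1,j)$ (along its column toward $D$) if $j=1$, or $j=2$ and $i>2$, or $i=n$ and $j\le n/2$; otherwise it moves to $(i,j-1)$ (along its row toward $D$). Other robots stay. *)

(* Defs.v *)
From mathcomp Require Import all_boot all_order.
Import Order.TTheory.

Set Implicit Arguments.
Unset Strict Implicit.
Unset Printing Implicit Defensive.

(* Nodes are pairs (i, j) with 1 <= i, j <= n (1-based, as in the paper):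
   D = (1,1), A = (n,1), C = (1,n), B = (n,n).
   Node (i,j) is at distance i-1 from side DC and j-1 from side DA. *)
Definition in_grid (n i j : nat) : bool := (1 <= i <= n) && (1 <= j <= n).

(* A configuration: f i j in {0,1,2} (0 empty, 1 singleton, 2 multiplicity). *)
Definition config := nat -> nat -> nat.

Definition lexlt (s t : seq nat) : bool := (s < t :> seqlexi nat)%O.
Definition lexle (s t : seq nat) : bool := (s <= t :> seqlexi nat)%O.

(* The eight words lambda_XY: line l (l-th parallel to side XY, l = 1 is XY),
   position p along the line (read in the direction from X to Y);
   the word is lines 1..n concatenated. *)
Section Words.
Variables (n : nat) (f : config).
Definition lamDA : seq nat := [seq f p l | l <- iota 1 n, p <- iota 1 n].
Definition lamDC : seq nat := [seq f l p | l <- iota 1 n, p <- iota 1 n].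
Definition lamAD : seq nat := [seq f (n + 1 - p) l | l <- iota 1 n, p <- iota 1 n].
Definition lamAB : seq nat := [seq f (n + 1 - l) p | l <- iota 1 n, p <- iota 1 n].
Definition lamBA : seq nat :=
  [seq f (n + 1 - l) (n + 1 - p) | l <- iota 1 n, p <- iota 1 n].
Definition lamBC : seq nat :=
  [seq f (n + 1 - p) (n + 1 - l) | l <- iota 1 n, p <- iota 1 n].
Definition lamCB : seq nat := [seq f p (n + 1 - l) | l <- iota 1 n, p <- iota 1 n].
Definition lamCD : seq nat := [seq f l (n + 1 - p) | l <- iota 1 n, p <- iota 1 n].
End Words.

Definition standing (n : nat) (f : config) : Prop :=
  [/\ f 1 1 = 0, f n 1 = 0, f 1 n = 0, f n n = 0 &
      exists i j, [&& in_grid n i j, [|| i == 1, i == n, j == 1 | j == n] & f i j != 0]].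

Definition asymmetric (n : nat) (f : config) : bool :=
  [&& lexlt (lamDC n f) (lamDA n f), lexlt (lamAD n f) (lamDA n f),
      lexlt (lamAB n f) (lamDA n f), lexlt (lamBA n f) (lamDA n f),
      lexlt (lamBC n f) (lamDA n f), lexlt (lamCB n f) (lamDA n f) &
      lexlt (lamCD n f) (lamDA n f)].

Definition no_mult (n : nat) (f : config) : bool := 2 \notin lamDA n f.

Fixpoint zero_first (s : seq nat) : seq nat :=
  match s with
  | [::] => [::]
  | x :: s' => if x == 0 then 0 :: zero_first s' else 0 :: s'
  end.

Definition almost_sym1 (n : nat) (f : config) : bool :=
  [&& asymmetric n f, no_mult n f,
      [exists j : 'I_n, f 1 j.+1 != 0] &
      zero_first (lamDA n f) == zero_first (lamDC n f)].

(* The second largest corner is A iff the largest of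
   lambda_AB, lambda_AD, lambda_CB, lambda_CD starts at A
   (in an asymmetric configuration these four words are pairwise distinct). *)
Definition second_is_A (n : nat) (f : config) : bool :=
  let m := [:: lamAB n f; lamAD n f; lamCB n f; lamCD n f] in
  all (fun w => lexle w (lamAB n f)) m || all (fun w => lexle w (lamAD n f)) m.

Definition almost_sym2 (n : nat) (f : config) : bool :=
  [&& asymmetric n f, no_mult n f &
      if second_is_A n f
      then zero_first (lamAB n f) == zero_first (lamAD n f)
      else zero_first (lamCB n f) == zero_first (lamCD n f)].

Definition purely_asym (n : nat) (f : config) : bool :=
  [&& asymmetric n f, ~~ almost_sym1 n f & ~~ almost_sym2 n f].

(* The node at (0-based) index k of lambda_DA: entry n(j-1)+i is node (i,j). *)
Definition node_of (n k : nat) : nat * nat := (k %% n + 1, k %/ n + 1).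

(* Nodes hosting the leading duo: if the first nonzero entry of lambda_DA is 1,
   the nodes of the first two nonzero entries; if it is 2, that node. *)
Definition duo_nodes (n : nat) (f : config) : seq (nat * nat) :=
  let s := lamDA n f in
  let k1 := find (fun x => x != 0) s in
  let k2 := k1.+1 + find (fun x => x != 0) (drop k1.+1 s) in
  if nth 0 s k1 == 1 then [:: node_of n k1; node_of n k2] else [:: node_of n k1].

(* Algorithm 2: destination of a leading-duo robot at (i,j). *)
Definition dest (n : nat) (u : nat * nat) : nat * nat :=
  let: (i, j) := u in
  if [|| j == 1, (j == 2) && (2 < i) | (i == n) && (j <= n./2)]
  then (i.-1, j) else (i, j.-1).

(* Exact robot counts c; robots have weak multiplicity detection, so the
   configuration they see is min(c, 2). *)
Definition view (c : nat -> nat -> nat) : config := fun i j => minn (c i j) 2.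

Definition move_robot (c : nat -> nat -> nat) (u v : nat * nat) : nat -> nat -> nat :=
  fun i j => c i j - ((i, j) == u) + ((i, j) == v).

(* Main.v *)
Require Import Defs.
From mathcomp Require Import all_boot all_order zify.
Import Order.TTheory.
Set Implicit Arguments. Unset Strict Implicit. Unset Printing Implicit Defensive.


Lemma lexlt_cons x s y t : lexlt (x :: s) (y :: t) = (x < y) || ((x == y) && lexlt s t).
Proof.
rewrite /lexlt ltxi_cons !leEnat.
by case: (ltngtP x y).
Qed.

Lemma lexlt_nth s t : size s = size t ->
  lexlt s t <-> exists k, k < size s /\ (forall j, j < k -> nth 0 s j = nth 0 t j)
                          /\ nth 0 s k < nth 0 t k.
Proof.
elim: s t => [|x s IH] [|y t] //=.
- by move=> _; split => [|[k []]].
- move=> [] /IH H; rewrite lexlt_cons; split.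
  + case/orP => [xy|/andP[/eqP -> /H [k [k1 [k2 k3]]]]].
    * by exists 0; split => //; split => // j.
    * exists k.+1; split => //; split => // [[|j]] //= jk; exact: k2.
  + move=> [[|k] [k1 [k2 k3]]] /=; first by rewrite k3.
    have -> : x = y by apply: (k2 0).
    rewrite eqxx ltnn /=; apply/H; exists k; split => //; split => // j jk.
    exact: (k2 j.+1).
Qed.

Lemma lexlt_zero s t k : size s = size t ->
  (forall j, j <= k -> nth 0 s j = 0) ->
  (exists j, [/\ j <= k, j < size t & nth 0 t j != 0]) -> lexlt s t.
Proof.
elim: s t k => [|x s IH] [|y t] k //=.
- by move=> _ _ [j []].
- move=> [] Hs Hz [j [jk jt tj]]; rewrite lexlt_cons.
  have x0 : x = 0 by apply: (Hz 0).
  subst x; case: y tj => [|y] tj; last by [].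
  rewrite eqxx /=; case: j jk jt tj => [|j] //= jk jt tj.
  case: k jk Hz => [|k] // jk Hz.
  apply: (IH t k Hs) => [i ik|]; first exact: (Hz i.+1).
  by exists j.
Qed.
Lemma nth_allp (F : nat -> nat -> nat) (s t : seq nat) q r :
  r < size t -> q < size s ->
  nth 0 [seq F x y | x <- s, y <- t] (q * size t + r) = F (nth 0 s q) (nth 0 t r).
Proof.
move=> rt; elim: s q => [|x s IH] [|q] //= qs.
- by rewrite nth_cat size_map rt (nth_map 0).
- rewrite nth_cat size_map mulSn -addnA ltnNge leq_addr /= addKn.
  exact: IH.
Qed.

Definition wd n (h : nat -> nat -> nat) := [seq h p l | l <- iota 1 n, p <- iota 1 n].

Definition idx n l p := l.-1 * n + p.-1.

Lemma size_wd n h : size (wd n h) = n * n.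
Proof. by rewrite /wd size_allpairs size_iota. Qed.

Lemma nth_wd n h l p : 0 < l <= n -> 0 < p <= n -> nth 0 (wd n h) (idx n l p) = h p l.
Proof.
move=> /andP[l0 ln] /andP[p0 pn].
have := @nth_allp (fun x y => h y x) (iota 1 n) (iota 1 n) l.-1 p.-1.
rewrite size_iota !nth_iota; try lia.
rewrite /wd /idx => ->; try lia. by congr h; lia.
Qed.

Lemma idx_ltl n l p l' p' : 0 < l -> 0 < p <= n -> l < l' -> idx n l p < idx n l' p'.
Proof.
move=> l0 pn ll; rewrite /idx.
have : l.-1.+1 * n <= l'.-1 * n by apply: leq_mul; lia.
rewrite mulSn; move: (l.-1 * n) (l'.-1 * n) => a b; lia.
Qed.

Definition plt (l p l' p' : nat) := (l < l') || ((l == l') && (p < p')).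

Lemma idx_lt n l p l' p' : 0 < l -> 0 < l' -> 0 < p <= n -> 0 < p' <= n ->
  (idx n l p < idx n l' p') = plt l p l' p'.
Proof.
move=> hl hl' hp hp'; rewrite /plt.
case: (ltngtP l l') => H /=.
- by apply: idx_ltl => //; lia.
- apply/negbTE; rewrite -leqNgt ltnW //; apply: idx_ltl => //; lia.
- subst; rewrite /idx; lia.
Qed.

Lemma idx_surj n k : k < n * n ->
  exists l p, [/\ 0 < l <= n, 0 < p <= n & k = idx n l p].
Proof.
move=> kn; have n0 : 0 < n by case: n kn => //.
exists (k %/ n).+1, (k %% n).+1; split.
- by rewrite ltn0Sn /= ltn_divLR.
- by rewrite ltn0Sn /= ltn_pmod.
- by rewrite /idx /= -divn_eq.
Qed.

Lemma idx_range n l p : 0 < l <= n -> 0 < p <= n -> idx n l p < n * n.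
Proof.
move=> hl hp; rewrite /idx.
have : l.-1.+1 * n <= n * n by apply: leq_mul; lia.
rewrite mulSn; move: (l.-1 * n) (n * n) => a b; lia.
Qed.

Definition ing n l p := (0 < l <= n) && (0 < p <= n).

Lemma wd_lt n h1 h2 : lexlt (wd n h1) (wd n h2) <->
  exists l p, [/\ ing n l p,
    (forall l' p', ing n l' p' -> plt l' p' l p -> h1 p' l' = h2 p' l') &
    h1 p l < h2 p l].
Proof.
rewrite lexlt_nth ?size_wd //; split.
- move=> [k [kn [H1 H2]]]; have [l [p [hl hp E]]] := idx_surj kn; subst k.
  exists l, p; split; first by rewrite /ing hl hp.
  + move=> l' p' /andP[hl' hp'] lt.
    rewrite -(nth_wd h1 hl' hp') -(nth_wd h2 hl' hp'); apply: H1.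
    by rewrite (@idx_lt n) //; lia.
  + by rewrite -(nth_wd h1 hl hp) -(nth_wd h2 hl hp).
- move=> [l [p [/andP[hl hp] H1 H2]]]; exists (idx n l p); split.
  + exact: idx_range.
  split; last by rewrite (nth_wd h1 hl hp) (nth_wd h2 hl hp).
  move=> j jk; have jn : j < n * n by apply: ltn_trans jk (idx_range hl hp).
  have [l' [p' [hl' hp' E]]] := idx_surj jn; subst j.
  rewrite (nth_wd h1 hl' hp') (nth_wd h2 hl' hp'); apply: H1; first by rewrite /ing hl' hp'.
  by rewrite -(@idx_lt n) //; lia.
Qed.

Lemma wd_zero n h1 h2 L P : ing n L P ->
  (forall l p, ing n l p -> plt l p L P || ((l == L) && (p == P)) -> h1 p l = 0) ->
  (exists l p, [/\ ing n l p, plt l p L P || ((l == L) && (p == P)) & h2 p l != 0]) ->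
  lexlt (wd n h1) (wd n h2).
Proof.
move=> /andP[hL hP] Hz [l [p [/andP[hl hp] lp h2n]]].
apply: (@lexlt_zero _ _ (idx n L P)); first by rewrite !size_wd.
- move=> j jk; have jn : j < n * n by apply: leq_ltn_trans jk (idx_range hL hP).
  have [l' [p' [hl' hp' E]]] := idx_surj jn; subst j.
  rewrite (nth_wd h1 hl' hp'); apply: Hz; first by rewrite /ing hl' hp'.
  move: jk; rewrite leq_eqVlt => /orP[/eqP E|]; last first.
    by rewrite (@idx_lt n) //; try lia; move=> ->.
  have e1 : plt l' p' L P = false by rewrite -(@idx_lt n) ?E ?ltnn //; lia.
  have e2 : plt L P l' p' = false by rewrite -(@idx_lt n) ?E ?ltnn //; lia.
  move: e1 e2; rewrite /plt; lia.
- exists (idx n l p); split; last by rewrite (nth_wd h2 hl hp).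
  + move: lp => /orP[lp|/andP[/eqP-> /eqP->]]; last by [].
    by apply: ltnW; rewrite (@idx_lt n) //; lia.
  + by rewrite size_wd; apply: idx_range.
Qed.

Inductive wn := DA | DC | AD | AB | BA | BC | CB | CD.

Definition ci n w l p := match w with
  DA => p | DC => l | AD => n + 1 - p | AB => n + 1 - l | BA => n + 1 - l
| BC => n + 1 - p | CB => p | CD => l end.
Definition cj n w l p := match w with
  DA => l | DC => p | AD => l | AB => p | BA => n + 1 - p
| BC => n + 1 - l | CB => n + 1 - l | CD => n + 1 - p end.
Definition pl n w i j := match w with
  DA => j | DC => i | AD => j | AB => n + 1 - i | BA => n + 1 - i
| BC => n + 1 - j | CB => n + 1 - j | CD => i end.
Definition pp n w i j := match w with
  DA => i | DC => j | AD => n + 1 - i | AB => j | BA => n + 1 - j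
| BC => n + 1 - i | CB => i | CD => n + 1 - j end.

Definition lam n w (f : nat -> nat -> nat) := wd n (fun p l => f (ci n w l p) (cj n w l p)).

Lemma lamE_DA n f : lamDA n f = lam n DA f. Proof. by []. Qed.
Lemma lamE_DC n f : lamDC n f = lam n DC f. Proof. by []. Qed.
Lemma lamE_AD n f : lamAD n f = lam n AD f. Proof. by []. Qed.
Lemma lamE_AB n f : lamAB n f = lam n AB f. Proof. by []. Qed.
Lemma lamE_BA n f : lamBA n f = lam n BA f. Proof. by []. Qed.
Lemma lamE_BC n f : lamBC n f = lam n BC f. Proof. by []. Qed.
Lemma lamE_CB n f : lamCB n f = lam n CB f. Proof. by []. Qed.
Lemma lamE_CD n f : lamCD n f = lam n CD f. Proof. by []. Qed.

Lemma cell_in n w l p : ing n l p -> ing n (ci n w l p) (cj n w l p).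
Proof. by case: w; rewrite /ing /=; lia. Qed.

Lemma pos_in n w i j : ing n i j -> ing n (pl n w i j) (pp n w i j).
Proof. by case: w; rewrite /ing /=; lia. Qed.

Lemma pos_cell n w l p : ing n l p -> pl n w (ci n w l p) (cj n w l p) = l /\ pp n w (ci n w l p) (cj n w l p) = p.
Proof. by case: w; rewrite /ing /=; lia. Qed.

Lemma cell_pos n w i j : ing n i j -> ci n w (pl n w i j) (pp n w i j) = i /\ cj n w (pl n w i j) (pp n w i j) = j.
Proof. by case: w; rewrite /ing /=; lia. Qed.

Lemma cell_eq n w l p i j : ing n l p -> ing n i j ->
  ((ci n w l p == i) && (cj n w l p == j)) = ((pl n w i j == l) && (pp n w i j == p)).
Proof. by case: w; rewrite /ing /= => H1 H2; apply/idP/idP; lia. Qed.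

Definition ple l p l' p' := plt l p l' p' || ((l == l') && (p == p')).

Ltac ulia := unfold plt, ple, ing in *; lia.

Lemma Xstar n w (f g : nat -> nat -> nat) u1 u2 v1 v2 Tl Tp Sl Sp :
  ing n u1 u2 -> ing n v1 v2 ->
  (forall i j, ing n i j -> ~~((i == u1) && (j == u2)) -> ~~((i == v1) && (j == v2)) -> g i j = f i j) ->
  g u1 u2 <= f u1 u2 -> f v1 v2 < g v1 v2 ->
  ing n Tl Tp ->
  (forall l p, ing n l p -> plt l p Tl Tp -> f (ci n w l p) (cj n w l p) = f p l) ->
  f (ci n w Tl Tp) (cj n w Tl Tp) < f Tp Tl ->
  ing n Sl Sp ->
  ((Sl == Tl) && (Sp == Tp) && plt Sl Sp v2 v1) || ((Sl == v2) && (Sp == v1) && ~~ plt Tl Tp v2 v1) ->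
  plt v2 v1 u2 u1 ->
  ~~ plt (pl n w u1 u2) (pp n w u1 u2) Sl Sp ->
  plt Sl Sp (pl n w v1 v2) (pp n w v1 v2) ->
  lexlt (lam n w g) (lam n DA g).
Proof.
move=> hu hv frame gu gv hT Tagree Tlt hS Scase BA' uS vS.
apply/wd_lt; exists Sl, Sp; split => //.
- move=> l p hlp lt /=.
  have hc := cell_in w hlp.
  rewrite (frame _ _ hc) ?(cell_eq _ hlp hu) ?(cell_eq _ hlp hv); first last.
  + clear -lt vS; ulia.
  + clear -lt uS; ulia.
  have hlp' : ing n p l by clear -hlp; ulia.
  rewrite (frame _ _ hlp'); first last.
  + clear -lt Scase; ulia.
  + clear -lt Scase BA'; ulia.
  apply: Tagree => //; clear -lt Scase; ulia.
- rewrite /=.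
  have hc := cell_in w hS.
  have hS' : ing n Sp Sl by clear -hS; ulia.
  have gcw : g (ci n w Sl Sp) (cj n w Sl Sp) <= f (ci n w Sl Sp) (cj n w Sl Sp).
    case E: ((ci n w Sl Sp == u1) && (cj n w Sl Sp == u2)).
      by case/andP: E => /eqP -> /eqP ->.
    rewrite frame // ?E // (cell_eq _ hS hv).
    clear -vS; ulia.
  case/orP: Scase => /andP[/andP[/eqP E1 /eqP E2] H].
  + subst Sl Sp.
    rewrite (frame _ _ hS'); first last.
    * clear -H; ulia.
    * clear -H BA'; ulia.
    exact: leq_ltn_trans gcw Tlt.
  + subst Sl Sp.
    apply: leq_ltn_trans gcw _; apply: leq_trans gv.
    case: (boolP (plt v2 v1 Tl Tp)) => HT.
    * by rewrite Tagree.
    * have [E1 E2] : Tl = v2 /\ Tp = v1 by clear -H HT; ulia.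
      by subst; apply: ltnW.
Qed.

Section First.
Variables (n : nat) (f : nat -> nat -> nat) (L1 P1 : nat).
Hypothesis Hfirst : forall i j, ing n i j -> plt j i L1 P1 -> f i j = 0.

Definition Twit w Tl Tp := [/\ ing n Tl Tp,
  (forall l p, ing n l p -> plt l p Tl Tp -> f (ci n w l p) (cj n w l p) = f p l) &
  f (ci n w Tl Tp) (cj n w Tl Tp) < f Tp Tl].

Lemma Twit_ex w : lexlt (lam n w f) (lam n DA f) -> exists Tl Tp, Twit w Tl Tp.
Proof. by move/wd_lt => [l [p [H1 H2 H3]]]; exists l, p; split. Qed.

Lemma T_ge w Tl Tp : Twit w Tl Tp -> ~~ plt Tl Tp L1 P1.
Proof.
move=> [hT _ Tlt]; apply/negP => lt.
have hT' : ing n Tp Tl by clear -hT; ulia.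
by move: Tlt; rewrite (Hfirst hT' lt).
Qed.

Lemma F2 w Tl Tp : Twit w Tl Tp -> forall i j, ing n i j -> f i j != 0 ->
  ~~ plt (pl n w i j) (pp n w i j) L1 P1.
Proof.
move=> TW i j hij fij; have := T_ge TW; case: TW => [hT Tag Tlt] Tge.
apply/negP => lt.
have hP := pos_in w hij; have [e1 e2] := cell_pos w hij.
case: (boolP (plt (pl n w i j) (pp n w i j) Tl Tp)) => H.
- have := Tag _ _ hP H; rewrite e1 e2 => E.
  have hP' : ing n (pp n w i j) (pl n w i j) by clear -hP; ulia.
  by move: fij; rewrite E (Hfirst hP' lt).
- by clear -H Tge lt; ulia.
Qed.

End First.

Section CaseB.
Variables (n : nat) (f : nat -> nat -> nat) (P1 u1 u2 : nat).
Hypothesis hF : ing n P1 1.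
Hypothesis fF : f P1 1 = 1.
Hypothesis Hfirst : forall i j, ing n i j -> plt j i 1 P1 -> f i j = 0.
Hypothesis hu : ing n u1 u2.
Hypothesis uA : plt 1 P1 u2 u1.
Hypothesis Hbetween : forall i j, ing n i j -> plt 1 P1 j i -> plt j i u2 u1 -> f i j = 0.

Let fF' : f P1 1 != 0. Proof. by rewrite fF. Qed.

Lemma notie w Tl Tp : Twit n f w Tl Tp -> f (ci n w 1 P1) (cj n w 1 P1) = 0 -> Tl = 1 /\ Tp = P1.
Proof.
move=> TW z; have := T_ge Hfirst TW; case: TW => [hT Tag Tlt] Tge.
case: (boolP (plt 1 P1 Tl Tp)) => H.
- have h1 : ing n 1 P1 by clear -hF; ulia.
  by move: (Tag _ _ h1 H); rewrite z fF.
- by clear -H Tge; ulia.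
Qed.

Lemma tie w Tl Tp : Twit n f w Tl Tp -> f (ci n w 1 P1) (cj n w 1 P1) != 0 ->
  [/\ ~~ plt Tl Tp u2 u1, f (ci n w 1 P1) (cj n w 1 P1) = 1 &
      forall i j, ing n i j -> f i j != 0 -> ~~ ((pl n w i j == 1) && (pp n w i j == P1)) ->
        ~~ plt (pl n w i j) (pp n w i j) u2 u1].
Proof.
move=> TW nz; have F2w := F2 Hfirst TW.
have := T_ge Hfirst TW; case: TW => [hT Tag Tlt] Tge.
have h1 : ing n 1 P1 by clear -hF; ulia.
have TP : plt 1 P1 Tl Tp.
  case: (boolP (plt 1 P1 Tl Tp)) => // H.
  have [e1 e2] : Tl = 1 /\ Tp = P1 by clear -H Tge; ulia.
  by subst; move: Tlt nz; rewrite fF; clear; lia.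
have E1 : f (ci n w 1 P1) (cj n w 1 P1) = 1 by rewrite Tag.
have TA : ~~ plt Tl Tp u2 u1.
  apply/negP => H.
  have hT' : ing n Tp Tl by clear -hT; ulia.
  by move: Tlt; rewrite (Hbetween hT').
split => // i j hij fij neq; apply/negP => H.
have hP := pos_in w hij; have [e1 e2] := cell_pos w hij.
have := F2w _ _ hij fij => ge.
have := Tag _ _ hP; rewrite e1 e2 => Tag'.
move: fij; rewrite Tag'; last by clear -H TA; ulia.
rewrite Hbetween //; first by clear -hP; ulia.
by clear -ge neq; ulia.
Qed.

End CaseB.

Lemma g_frame c u1 u2 v1 v2 i j : ~~((i == u1) && (j == u2)) -> ~~((i == v1) && (j == v2)) ->
  view (move_robot c (u1, u2) (v1, v2)) i j = view c i j.
Proof.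
move=> hu hv; rewrite /view /move_robot !xpair_eqE.
by move/negbTE: hu => ->; move/negbTE: hv => ->; rewrite subn0 addn0.
Qed.

Lemma g_u c u1 u2 v1 v2 : ~~((u1 == v1) && (u2 == v2)) ->
  view (move_robot c (u1, u2) (v1, v2)) u1 u2 = minn (c u1 u2 - 1) 2.
Proof.
move=> h; rewrite /view /move_robot !xpair_eqE !eqxx /=.
by move/negbTE: h => ->; rewrite addn0.
Qed.

Lemma g_v c u1 u2 v1 v2 : ~~((u1 == v1) && (u2 == v2)) ->
  view (move_robot c (u1, u2) (v1, v2)) v1 v2 = minn (c v1 v2 + 1) 2.
Proof.
move=> h; rewrite /view /move_robot !xpair_eqE !eqxx /=.
have -> : (v1 == u1) && (v2 == u2) = false by apply/negbTE; move: h; rewrite eq_sym (eq_sym v2).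
by rewrite subn0.
Qed.

Lemma caseR n w (f g : nat -> nat -> nat) P1 u1 u2 v1 v2 :
  ing n P1 1 -> ing n u1 u2 -> ing n v1 v2 ->
  (forall i j, ing n i j -> f i j != 0 -> ~~ plt (pl n w i j) (pp n w i j) 1 P1) ->
  pl n w u1 u2 = 1 -> pp n w u1 u2 = P1 ->
  (forall i j, ing n i j -> ~~((i == u1) && (j == u2)) -> ~~((i == v1) && (j == v2)) -> g i j = f i j) ->
  g u1 u2 = 0 -> 0 < g P1 1 ->
  plt 1 P1 (pl n w v1 v2) (pp n w v1 v2) ->
  lexlt (lam n w g) (lam n DA g).
Proof.
move=> hF hu hv F2w e1 e2 frame gu0 gF vpos.
have h1 : ing n 1 P1 by clear -hF; ulia.
apply: (wd_zero h1).
- move=> l p hlp le /=.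
  have hc := cell_in w hlp.
  case E: ((ci n w l p == u1) && (cj n w l p == u2)).
    by case/andP: E => /eqP -> /eqP ->.
  rewrite frame ?E //; last first.
    rewrite (cell_eq _ hlp hv); clear -le vpos; move: le vpos; rewrite /ple; ulia.
  apply/eqP; apply/negP => /negP nz.
  have := F2w _ _ hc nz; have [p1 p2] := pos_cell w hlp; rewrite p1 p2 => H.
  move: E; rewrite (cell_eq _ hlp hu) e1 e2.
  clear -le H; move: le H; rewrite /ple; ulia.
- exists 1, P1; split => //; first by rewrite /ple !eqxx orbT.
  by rewrite /= -lt0n.
Qed.

Lemma specialAB n h (f g : nat -> nat -> nat) :
  n = h + h -> 1 < h ->
  f h 1 = 1 ->
  (forall i j, ing n i j -> plt j i 1 h -> f i j = 0) ->
  (forall i j, ing n i j -> plt 1 h j i -> plt j i (h + 1) n -> f i j = 0) ->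
  (forall i j, ing n i j -> f i j != 0 -> ~~ ((pl n BA i j == 1) && (pp n BA i j == h)) ->
        ~~ plt (pl n BA i j) (pp n BA i j) (h + 1) n) ->
  (forall i j, ing n i j -> ~~((i == n) && (j == h + 1)) -> ~~((i == n) && (j == h)) -> g i j = f i j) ->
  g n (h + 1) = 0 -> g n h = 1 ->
  lexlt (lam n AB g) (lam n DA g).
Proof.
move=> En h1 fF Hfirst Hbetween BAocc frame gu gv.
apply/wd_lt; exists h, n; split; first by rewrite /ing; lia.
- move=> l p hlp lt /=.
  have hlp' : ing n p l by clear -hlp; ulia.
  have hc : ing n (n + 1 - l) p by clear -hlp; ulia.
  have RHS : g p l = ((l == 1) && (p == h)).
    rewrite frame //; last 2 first.
    + clear -lt En; move: lt; ulia.
    + clear -lt En; move: lt; ulia.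
    case: (boolP ((l == 1) && (p == h))) => [/andP[/eqP -> /eqP ->] //|ne].
    case: (boolP (plt l p 1 h)) => H; first by apply: Hfirst.
    apply: Hbetween => //; clear -H ne lt En h1; move: H ne lt; ulia.
  rewrite RHS.
  case: (boolP ((l == 1) && (p == h))) => [/andP[/eqP -> /eqP ->]|ne].
    have -> : n + 1 - 1 = n by lia.
    by rewrite gv.
  case: (boolP ((l == 1) && (p == h + 1))) => [/andP[/eqP -> /eqP ->]|ne2].
    have -> : n + 1 - 1 = n by lia.
    by rewrite gu.
  rewrite frame //; last 2 first.
  + clear -ne2 hlp En; move: ne2; ulia.
  + clear -ne hlp En; move: ne; ulia.
  apply/eqP; apply/negP => /negP nz.
  have := BAocc _ _ hc nz; rewrite /=.
  clear -ne ne2 lt hlp En h1; move: ne ne2 lt; ulia.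
- rewrite /= gv.
  have hc : ing n (n + 1 - h) n by clear -En h1; ulia.
  rewrite frame //; last 2 first.
  + clear -En h1; ulia.
  + clear -En h1; ulia.
  case: (boolP (f (n + 1 - h) n == 0)) => [/eqP -> //|nz].
  have := BAocc _ _ hc nz; rewrite /=.
  clear -En h1; ulia.
Qed.

Lemma node_idx n l p : 0 < l -> 0 < p <= n -> node_of n (idx n l p) = (p, l).
Proof.
move=> hl hp; rewrite /node_of /idx modnMDl modn_small ?divnMDl ?divn_small; try lia.
congr pair; lia.
Qed.

Unset Implicit Arguments.

Ltac dsolve Hd := case/orP: Hd => [/andP[/andP[/or3P[?|?|?] /eqP ?] /eqP ?] | /andP[/andP[? /eqP ?] /eqP ?]]; subst; ulia.

Theorem lemma3 (n : nat) (c : nat -> nat -> nat) (u : nat * nat) :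
  ~~ odd n ->
  (forall i j, ~~ in_grid n i j -> c i j = 0) ->
  standing n (view c) ->
  purely_asym n (view c) ->
  u \in duo_nodes n (view c) ->
  0 < c u.1 u.2 ->
  let g := view (move_robot c u (dest n u)) in
  [&& lexlt (lamCD n g) (lamDA n g), lexlt (lamAD n g) (lamDA n g),
      lexlt (lamCB n g) (lamDA n g), lexlt (lamAB n g) (lamDA n g),
      lexlt (lamBA n g) (lamDA n g) & lexlt (lamBC n g) (lamDA n g)].
Proof.
move=> hev hout hst hpa; case: u => u1 u2 hu cu; rewrite /= in cu; cbv zeta.
set g := view (move_robot _ _ _).
have hug : ing n u1 u2.
  case: (boolP (in_grid n u1 u2)) => // H; by move: cu; rewrite hout.
set f := view c in hst hpa hu.
case/and3P: hpa => hasym _ _.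
move/and4P: hasym => [tDC tAD tAB /and4P[tBA tBC tCB tCD]].
have [TDCl [TDCp TWDC]] := @Twit_ex n f DC tDC.
have [TADl [TADp TWAD]] := @Twit_ex n f AD tAD.
have [TABl [TABp TWAB]] := @Twit_ex n f AB tAB.
have [TBAl [TBAp TWBA]] := @Twit_ex n f BA tBA.
have [TBCl [TBCp TWBC]] := @Twit_ex n f BC tBC.
have [TCBl [TCBp TWCB]] := @Twit_ex n f CB tCB.
have [TCDl [TCDp TWCD]] := @Twit_ex n f CD tCD.
case: hst => c11 cn1 c1n cnn [i0 [j0 /and3P[hg0 hb0 nz0]]].
move: hu; rewrite /duo_nodes.
set s := lamDA n f.
have sE : s = wd n f by [].
set k1 := find _ s => hu.
have hg0' : ing n i0 j0 := hg0.
have hhas : has (fun x => x != 0) s.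
  apply/(has_nthP 0); exists (idx n j0 i0).
    by rewrite sE size_wd; apply: idx_range; clear -hg0'; ulia.
  by rewrite sE nth_wd //; clear -hg0'; ulia.
have k1n : k1 < n * n by rewrite -(size_wd n f) -sE -has_find.
have [l1 [p1 [hl1 hp1 Ek1]]] := idx_surj k1n.
have fF : f p1 l1 != 0.
  by have := nth_find 0 hhas; rewrite -/k1 Ek1 sE nth_wd.
have Hfirst : forall i j, ing n i j -> plt j i l1 p1 -> f i j = 0.
  move=> i j hij lt.
  have hlt : idx n j i < k1 by rewrite Ek1 (@idx_lt n) //; clear -hij hl1 hp1; ulia.
  have := before_find 0 hlt; rewrite sE nth_wd; last 2 first.
  + by clear -hij; ulia.
  + by clear -hij; ulia.
  by move/negbFE/eqP.
have l1E : l1 = 1.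
  case/or4P: hb0 => /eqP E; subst.
  + have := F2 Hfirst TWDC hg0' nz0; rewrite /=; clear -hl1; ulia.
  + have := F2 Hfirst TWAB hg0' nz0; rewrite /=; clear -hl1; ulia.
  + case: (boolP (plt 1 i0 l1 p1)) => H; first by move: nz0; rewrite Hfirst.
    clear -H hl1; move: H; ulia.
  + have := F2 Hfirst TWCB hg0' nz0; rewrite /=; clear -hl1; ulia.
subst l1.
have p1r : 1 < p1 < n.
  have a1 : p1 != 1 by move: fF; apply: contra => /eqP ->; rewrite c11.
  have a2 : p1 != n by move: fF; apply: contra => /eqP ->; rewrite cn1.
  by clear -a1 a2 hp1; lia.
have hF : ing n p1 1 by clear -hp1 p1r; ulia.
have FAD : p1 + p1 <= n + 1.
  have := F2 Hfirst TWAD hF fF; rewrite /=; clear -p1r; ulia.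
have [h En] : exists h, n = h + h.
  by exists n./2; rewrite -{1}(odd_double_half n) (negbTE hev) add0n addnn.
have h2 : 1 < h by clear -En p1r FAD; lia.
have ufu : f u1 u2 != 0 by rewrite /f /view; clear -cu; lia.
have [uF | [f1 uS]] : ((u1, u2) = (p1, 1)) \/
    (nth 0 s (idx n 1 p1) = 1 /\ (u1, u2) = node_of n ((idx n 1 p1).+1 + find (fun x => x != 0) (drop (idx n 1 p1).+1 s))).
  case: ifP hu; rewrite Ek1 => E; rewrite !inE node_idx //; first last.
  - by move/eqP; left.
  - by case/orP => /eqP H; [left | right; split => //; apply/eqP].
-
  case: uF => E1 E2; subst u1 u2.
  have dE : dest n (p1, 1) = (p1.-1, 1) by rewrite /dest eqxx.
  have hv : ing n p1.-1 1 by clear -p1r; ulia.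
  have frame : forall i j, ing n i j -> ~~((i == p1) && (j == 1)) -> ~~((i == p1.-1) && (j == 1)) ->
      g i j = f i j by move=> i j _; rewrite /g dE; apply: g_frame.
  have neq : ~~((p1 == p1.-1) && (1 == 1)) by clear -p1r; lia.
  have gu : g p1 1 <= f p1 1 by rewrite /g dE g_u // /f /view; clear; lia.
  have fv0 : f p1.-1 1 = 0 by apply: Hfirst => //; clear -p1r; rewrite /plt; lia.
  have gv : f p1.-1 1 < g p1.-1 1.
    rewrite /g dE g_v // fv0; move: fv0; rewrite /f /view; clear; lia.
  have XA : forall w Tl Tp, Twit n f w Tl Tp -> plt 1 p1.-1 (pl n w p1.-1 1) (pp n w p1.-1 1) ->
      lexlt (lam n w g) (lam n DA g).
    move=> w Tl Tp TW vpos; have Tge := T_ge Hfirst TW; have uF2 := F2 Hfirst TW hF fF.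
    case: TW => hT Tag Tlt.
    have hS : ing n 1 p1.-1 by clear -p1r; ulia.
    apply: (Xstar (Sl := 1) (Sp := p1.-1) hF hv frame gu gv hT Tag Tlt hS) => //.
    + by clear -Tge p1r; move: Tge; ulia.
    + by clear -p1r; ulia.
    + by clear -uF2 p1r; move: uF2; ulia.
  apply/andP; split; [|apply/and5P; split].
  + apply: (XA _ _ _ TWCD); rewrite /=; clear -p1r FAD En; ulia.
  + apply: (XA _ _ _ TWAD); rewrite /=; clear -p1r FAD En; ulia.
  + apply: (XA _ _ _ TWCB); rewrite /=; clear -p1r FAD En; ulia.
  + apply: (XA _ _ _ TWAB); rewrite /=; clear -p1r FAD En; ulia.
  + apply: (XA _ _ _ TWBA); rewrite /=; clear -p1r FAD En; ulia.
  + apply: (XA _ _ _ TWBC); rewrite /=; clear -p1r FAD En; ulia.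
-
  set k2 := _ + _ in uS.
  have fF1 : f p1 1 = 1.
    by move: f1; rewrite sE nth_wd //; clear -hp1; ulia.
  have k2n : k2 < n * n.
    move: uS hug; rewrite /node_of => -[_ ->]; rewrite /ing -ltn_divLR; last by clear -p1r; lia.
    by clear; lia.
  have [l2 [p2 [hl2 hp2 Ek2]]] := idx_surj k2n.
  move: uS; rewrite Ek2 node_idx; last 2 first.
  + by clear -hl2; lia.
  + by [].
  case=> E1 E2; subst u1 u2.
  have uA : plt 1 p1 l2 p2.
    rewrite -(@idx_lt n) //; try (clear -hp1 p1r hp2 hl2; lia).
    by rewrite -Ek2 /k2; clear; lia.
  have Hbetween : forall i j, ing n i j -> plt 1 p1 j i -> plt j i l2 p2 -> f i j = 0.
    move=> i j hij lt1 lt2.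
    have i1 : idx n 1 p1 < idx n j i by rewrite (@idx_lt n) //; clear -hij hp1 p1r; ulia.
    have i2 : idx n j i < k2 by rewrite Ek2 (@idx_lt n) //; clear -hij hp2 hl2; ulia.
    have r : idx n j i - (idx n 1 p1).+1 < find (fun x => x != 0) (drop (idx n 1 p1).+1 s).
      by move: i2; rewrite /k2; clear -i1; lia.
    have := before_find 0 r; rewrite nth_drop subnKC // sE nth_wd; last 2 first.
    + by clear -hij; ulia.
    + by clear -hij; ulia.
    by move/negbFE/eqP.
  have nh : n./2 = h by rewrite En addnn doubleK.
  have [v1 [v2 [dE Hdest]]] : exists v1 v2, dest n (p2, l2) = (v1, v2) /\
     (([|| l2 == 1, (l2 == 2) && (2 < p2) | (p2 == n) && (l2 <= h)] && (v1 == p2.-1) && (v2 == l2)) ||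
      (~~ [|| l2 == 1, (l2 == 2) && (2 < p2) | (p2 == n) && (l2 <= h)] && (v1 == p2) && (v2 == l2.-1))).
    exists (dest n (p2, l2)).1, (dest n (p2, l2)).2; split; first by case: dest.
    by rewrite /dest nh; case: ifP => C /=; rewrite ?C !eqxx ?orbT.
  have nc1 : ~~((p2 == 1) && (l2 == 1)).
    by apply/negP => /andP[/eqP e /eqP e']; move: ufu; rewrite e e' c11.
  have nc2 : ~~((p2 == n) && (l2 == 1)).
    by apply/negP => /andP[/eqP e /eqP e']; move: ufu; rewrite e e' cn1.
  have nc3 : ~~((p2 == 1) && (l2 == n)).
    by apply/negP => /andP[/eqP e /eqP e']; move: ufu; rewrite e e' c1n.
  have nc4 : ~~((p2 == n) && (l2 == n)).
    by apply/negP => /andP[/eqP e /eqP e']; move: ufu; rewrite e e' cnn.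
  have hv : ing n v1 v2 by clear -Hdest hug nc1 nc2 nc3 nc4; ulia.
  have neq : ~~((p2 == v1) && (l2 == v2)) by clear -Hdest hug nc1 nc2 nc3 nc4; ulia.
  have BA' : plt v2 v1 l2 p2 by clear -Hdest hug nc1 nc2 nc3 nc4; ulia.
  have frame : forall i j, ing n i j -> ~~((i == p2) && (j == l2)) -> ~~((i == v1) && (j == v2)) ->
      g i j = f i j by move=> i j _; rewrite /g dE; apply: g_frame.
  have gu : g p2 l2 <= f p2 l2 by rewrite /g dE g_u // /f /view; clear; lia.
  have gu0 : f p2 l2 = 1 -> g p2 l2 = 0 by rewrite /g dE g_u // /f /view; clear; lia.
  have cv : c v1 v2 < 2.
    case: (boolP ((v1 == p1) && (v2 == 1))) => [/andP[/eqP e /eqP e']|ne].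
      by rewrite e e'; move: fF1; rewrite /f /view; clear; lia.
    have : f v1 v2 = 0.
      case: (boolP (plt v2 v1 1 p1)) => H; first by apply: Hfirst.
      apply: Hbetween => //; clear -H ne; move: H ne; ulia.
    rewrite /f /view; clear; lia.
  have gv : f v1 v2 < g v1 v2 by rewrite /g dE g_v // /f /view; clear -cv; lia.
  have gF : 0 < g p1 1.
    case: (boolP ((p1 == v1) && (1 == v2))) => [/andP[/eqP e /eqP e']|ne].
      by move: gv; rewrite -e -e'; clear; lia.
    rewrite frame // ?fF1 //; clear -uA; move: uA; ulia.
  have BW : forall w Tl Tp, Twit n f w Tl Tp ->
    (~~ plt (pl n w p2 l2) (pp n w p2 l2) 1 p1 -> ~~ ((pl n w p2 l2 == 1) && (pp n w p2 l2 == p1)) ->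
       ((plt 1 p1 v2 v1 && plt 1 p1 (pl n w v1 v2) (pp n w v1 v2)) ||
        (~~ plt 1 p1 v2 v1 && plt v2 v1 (pl n w v1 v2) (pp n w v1 v2)))
       \/ lexlt (lam n w g) (lam n DA g)) ->
    (~~ plt (pl n w p2 l2) (pp n w p2 l2) l2 p2 -> ~~ plt (pl n w p1 1) (pp n w p1 1) l2 p2 ->
       ~~ ((pl n w p2 l2 == 1) && (pp n w p2 l2 == p1)) -> plt v2 v1 (pl n w v1 v2) (pp n w v1 v2)) ->
    ((pl n w p2 l2 == 1) && (pp n w p2 l2 == p1) -> plt 1 p1 (pl n w v1 v2) (pp n w v1 v2)) ->
    ~~ ((pl n w p1 1 == 1) && (pp n w p1 1 == p1)) ->
    lexlt (lam n w g) (lam n DA g).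
    move=> w Tl Tp TW Anotie Atie AR ARF.
    have F2u := F2 Hfirst TW hug ufu.
    case: (boolP (f (ci n w 1 p1) (cj n w 1 p1) == 0)) => [/eqP z | nz].
    - have [e1 e2] := notie hF fF1 Hfirst TW z.
      have Rne : ~~ ((pl n w p2 l2 == 1) && (pp n w p2 l2 == p1)).
        have h1 : ing n 1 p1 by clear -hF; ulia.
        rewrite -(cell_eq _ h1 hug); apply/negP => /andP[/eqP e1' /eqP e2'].
        by move: z; rewrite e1' e2'; apply/eqP.
      case: (Anotie F2u Rne) => [C1 | //].
      subst Tl Tp; case: TW => hT Tag Tlt.
      case: (boolP (plt 1 p1 v2 v1)) => HB.
      + apply: (Xstar (Sl:=1) (Sp:=p1) hug hv frame gu gv hT Tag Tlt hT) => //.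
        * by rewrite !eqxx HB.
        * by clear -C1 HB; move: C1 HB; ulia.
      + have hS : ing n v2 v1 by clear -hv; ulia.
        apply: (Xstar (Sl:=v2) (Sp:=v1) hug hv frame gu gv hT Tag Tlt hS) => //.
        * by rewrite !eqxx HB orbT.
        * by clear -F2u HB; move: F2u HB; ulia.
        * by clear -C1 HB; move: C1 HB; ulia.
    - have [TA E1 occ] := tie hF fF1 Hfirst Hbetween TW nz.
      case: (boolP ((pl n w p2 l2 == 1) && (pp n w p2 l2 == p1))) => R.
      + have [e1 e2] : pl n w p2 l2 = 1 /\ pp n w p2 l2 = p1 by case/andP: R => /eqP -> /eqP ->.
        have fu1 : f p2 l2 = 1.
          by have [c1 c2] := cell_pos w hug; move: E1; rewrite -e1 -e2 c1 c2.
        exact: (caseR hF hug hv (F2 Hfirst TW) e1 e2 frame (gu0 fu1) gF (AR R)).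
      + case: TW => hT Tag Tlt.
        have hS : ing n v2 v1 by clear -hv; ulia.
        have ou := occ _ _ hug ufu R.
        have oF := occ _ _ hF fF ARF.
        apply: (Xstar (Sl:=v2) (Sp:=v1) hug hv frame gu gv hT Tag Tlt hS) => //.
        * by rewrite !eqxx /=; clear -TA BA'; move: TA BA'; ulia.
        * by clear -ou BA'; move: ou BA'; ulia.
        * exact: Atie.
  apply/andP; split; [|apply/and5P; split].
  + apply: (BW _ _ _ TWCD); rewrite /=.
    * by move=> H H'; left; clear -uA H Hdest hug p1r En h2; dsolve Hdest.
    * by move=> H1 H2 H3; clear -uA H1 Hdest hug p1r En h2; dsolve Hdest.
    * by move=> R; clear -R Hdest hug p1r En h2; dsolve Hdest.
    * by clear -Hdest hug p1r En h2; dsolve Hdest.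
  + apply: (BW _ _ _ TWAD); rewrite /=.
    * by move=> H H'; left; clear -H Hdest hug p1r En h2; dsolve Hdest.
    * by move=> H1 H2 H3; clear -H1 Hdest hug p1r En h2; dsolve Hdest.
    * by move=> R; clear -R Hdest hug p1r En h2; dsolve Hdest.
    * by clear -Hdest hug p1r En h2; dsolve Hdest.
  + apply: (BW _ _ _ TWCB); rewrite /=.
    * by move=> H H'; left; clear -Hdest hug p1r En h2; dsolve Hdest.
    * by move=> H1 H2 H3; clear -H1 Hdest hug p1r En h2; dsolve Hdest.
    * by move=> R; clear -Hdest hug p1r En h2; dsolve Hdest.
    * by clear -Hdest hug p1r En h2; dsolve Hdest.
  + apply: (BW _ _ _ TWAB); rewrite /=.
    * move=> H H'.
      have [C|C] := boolP (((plt 1 p1 v2 v1 && plt 1 p1 (n + 1 - v1) v2) ||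
                           (~~ plt 1 p1 v2 v1 && plt v2 v1 (n + 1 - v1) v2))); first by left.
      right.
      have [ep1 ep2 el2 ev1 ev2] : [/\ p1 = h, p2 = n, l2 = h + 1, v1 = n & v2 = h].
        clear -C H H' Hdest hug nc1 nc2 nc3 nc4 uA FAD En p1r h2; case/orP: Hdest => /andP[/andP[HC /eqP ev1] /eqP ev2]; subst v1 v2.
          by exfalso; move: C H H' HC hug nc1 nc2 nc3 nc4 uA FAD p1r h2 En; rewrite /plt /ing; lia.
        move: C H H' HC hug nc1 nc2 nc3 nc4 uA FAD p1r h2 En.
        rewrite /plt /ing => C H H' HC hug nc1 nc2 nc3 nc4 uA FAD p1r h2 En.
        have ep2 : p2 = n by lia.
        subst p2.
        have el2 : l2 = h + 1 by lia.
        by subst l2; split; lia.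
      have nzBA : f (ci n BA 1 p1) (cj n BA 1 p1) != 0.
        rewrite /=; have -> : n + 1 - 1 = p2 by clear -ep2; lia.
        by have -> : n + 1 - p1 = l2 by clear -ep1 el2 En; lia.
      have [_ E1 occ] := tie hF fF1 Hfirst Hbetween TWBA nzBA.
      have fv0 : f v1 v2 = 0.
        apply: Hbetween => //; clear -ep1 ep2 el2 ev1 ev2 En h2; ulia.
      subst p1 p2 l2 v1 v2.
      apply: (specialAB En h2 fF1 Hfirst Hbetween occ frame).
      - apply: gu0; move: E1; rewrite /=.
        have -> : n + 1 - 1 = n by clear; lia.
        by have -> : n + 1 - h = h + 1 by clear -En; lia.
      - by rewrite /g dE g_v //; move: fv0; rewrite /f /view; clear; lia.
    * by move=> H1 H2 H3; clear -H1 Hdest hug p1r En h2; dsolve Hdest.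
    * by move=> R; clear -FAD R Hdest hug p1r En h2; dsolve Hdest.
    * by clear -Hdest hug p1r En h2; dsolve Hdest.
  + apply: (BW _ _ _ TWBA); rewrite /=.
    * by move=> H H'; left; clear -H Hdest hug p1r En h2; dsolve Hdest.
    * by move=> H1 H2 H3; clear -H1 Hdest hug p1r En h2; dsolve Hdest.
    * by move=> R; clear -R Hdest hug p1r En h2; dsolve Hdest.
    * by clear -Hdest hug p1r En h2; dsolve Hdest.
  + apply: (BW _ _ _ TWBC); rewrite /=.
    * by move=> H H'; left; clear -Hdest hug p1r En h2; dsolve Hdest.
    * by move=> H1 H2 H3; clear -H1 Hdest hug p1r En h2; dsolve Hdest.
    * by move=> R; clear -Hdest hug p1r En h2; dsolve Hdest.
    * by clear -Hdest hug p1r En h2; dsolve Hdest.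
Qed.
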